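(* For every $y\in\mathbf H^1_{\mathbb C}$, $$\lim_{b\to\infty}\mathrm{Cart}\big(g(1,b)y,\,g(1,-b)y,\,y\big)=-\frac{\pi}{2}.$$
   Context: $\mathbf H^1_{\mathbb C}$ is the set of lines $[v]$ in $\mathbb C^2$ with $B(v,v)>0$, where $B(z,w)=z_1\bar w_1-z_2\bar w_2$. Let $\xi_1=(e_1+e_2)/\sqrt2$, $\xi_2=(e_1-e_2)/\sqrt2$, and for $b\in\mathbb R$ let $g(1,b)\in SU(1,1)$ have matrix $\begin{pmatrix}1&ib\\0&1\end{pmatrix}$ in the basis $(\xi_1,\xi_2)$, acting on $\mathbf H^1_{\mathbb C}$. The Cartan argument is $\mathrm{Cart}(x,y,z)=\arg\big(B(\tilde x,\tilde y)B(\tilde y,\tilde z)B(\tilde z,\tilde x)\big)\in(-\pi/2,\pi/2)$ for any lifts $\tilde x,\tilde y,\tilde z$. *)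

(* Defs.v *)
From Stdlib Require Import Reals.
From Coquelicot Require Import Coquelicot.
Open Scope R_scope.

Definition C2 := (C * C)%type.

Definition C2add (u v : C2) : C2 := (Cplus (fst u) (fst v), Cplus (snd u) (snd v)).
Definition C2scal (a : C) (v : C2) : C2 := (Cmult a (fst v), Cmult a (snd v)).

Definition B (z w : C2) : C :=
  Cminus (Cmult (fst z) (Cconj (fst w))) (Cmult (snd z) (Cconj (snd w))).

(* v is a lift of a point of H^1_C : B(v,v) > 0 (B(v,v) is real) *)
Definition in_H1 (v : C2) : Prop := 0 < Re (B v v).

Definition e1 : C2 := (RtoC 1, RtoC 0).
Definition e2 : C2 := (RtoC 0, RtoC 1).
Definition xi1 : C2 := C2scal (RtoC (/ sqrt 2)) (C2add e1 e2).
Definition xi2 : C2 := C2scal (RtoC (/ sqrt 2)) (C2add e1 (C2scal (RtoC (-1)) e2)).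

(* coordinates of v in the basis (xi1, xi2) *)
Definition xcoord1 (v : C2) : C := Cmult (RtoC (/ sqrt 2)) (Cplus (fst v) (snd v)).
Definition xcoord2 (v : C2) : C := Cmult (RtoC (/ sqrt 2)) (Cminus (fst v) (snd v)).

(* g(1,b): matrix [[1, i b],[0, 1]] in the basis (xi1, xi2), acting on C^2 *)
Definition g1 (b : R) (v : C2) : C2 :=
  let c1 := xcoord1 v in
  let c2 := xcoord2 v in
  C2add (C2scal (Cplus c1 (Cmult (0, b) c2)) xi1) (C2scal c2 xi2).

(* principal argument in (-PI, PI] (atan2 convention) *)
Definition Carg (z : C) : R :=
  let x := Re z in let y := Im z in
  match Rlt_dec 0 x with
  | left _ => atan (y / x)
  | right _ =>
    match Rlt_dec x 0 with
    | left _ => if Rle_dec 0 y then atan (y / x) + PI else atan (y / x) - PI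
    | right _ =>
      match Rlt_dec 0 y with
      | left _ => PI / 2
      | right _ => if Rlt_dec y 0 then - (PI / 2) else 0
      end
    end
  end.

(* Cartan angular invariant, computed on lifts x, y, z *)
Definition Cart (x y z : C2) : R :=
  Carg (Cmult (Cmult (B x y) (B y z)) (B z x)).

(* Main.v *)
Require Import Defs.
From Stdlib Require Import Reals Lra.
From Coquelicot Require Import Coquelicot.
Open Scope R_scope.

Lemma sq2 : / sqrt 2 * / sqrt 2 = / 2.
Proof. rewrite <- Rinv_mult, sqrt_sqrt; lra. Qed.

Lemma g1_eq b x1 y1 x2 y2 :
  g1 b ((x1,y1),(x2,y2)) =
  ((x1 - b/2*(y1-y2), y1 + b/2*(x1-x2)), (x2 - b/2*(y1-y2), y2 + b/2*(x1-x2))).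
Proof.
  unfold g1, C2add, C2scal, xcoord1, xcoord2, xi1, xi2, e1, e2, C2add, C2scal.
  simpl. unfold Cplus, Cmult, Cminus, Copp, RtoC, Cplus; simpl.
  set (t := / sqrt 2). assert (Ht := sq2). fold t in Ht.
  assert (Ht2 : t ^ 2 = / 2) by (rewrite <- Ht; ring).
  f_equal; f_equal; ring_simplify; rewrite Ht2; field.
Qed.

Lemma prod_eq b x1 y1 x2 y2 :
  let v := ((x1,y1),(x2,y2)) in
  let D := x1*x1+y1*y1-x2*x2-y2*y2 in
  let E := (x1-x2)*(x1-x2)+(y1-y2)*(y1-y2) in
  Cmult (Cmult (B (g1 b v) (g1 (-b) v)) (B (g1 (-b) v) v)) (B v (g1 b v))
  = (D*D*D + 3/4*D*(b*b)*(E*E), - (b*b*b)*(E*E*E)/4).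
Proof.
  intros v D E. unfold v. rewrite !g1_eq. unfold B, D, E.
  unfold Cplus, Cmult, Cminus, Copp, Cconj, RtoC, Cplus; simpl.
  f_equal; field.
Qed.

Lemma atan_lim0 : is_lim atan 0 0.
Proof.
  rewrite <- atan_0 at 2. apply is_lim_continuity.
  apply derivable_continuous_pt. exists (/ (1 + 0 ^ 2)). apply derivable_pt_lim_atan.
Qed.

Theorem mainTheorem16 (y : C2) (hy : in_H1 y) :
  is_lim (fun b : R => Cart (g1 b y) (g1 (- b) y) y) p_infty (- (PI / 2)).
Proof.
  destruct y as [[x1 y1] [x2 y2]].
  unfold in_H1, B, Cminus, Cmult, Cconj, Cplus, Copp in hy; simpl in hy.
  set (D := x1*x1+y1*y1-x2*x2-y2*y2).
  set (E := (x1-x2)*(x1-x2)+(y1-y2)*(y1-y2)).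
  assert (HD : 0 < D) by (unfold D; lra).
  assert (HE : 0 < E).
  { unfold E. destruct (Req_dec x1 x2); destruct (Req_dec y1 y2).
    - subst. unfold D in HD. lra.
    - assert (0 < (y1-y2)*(y1-y2)) by (apply Rsqr_pos_lt; lra). nra.
    - assert (0 < (x1-x2)*(x1-x2)) by (apply Rsqr_pos_lt; lra). nra.
    - assert (0 < (y1-y2)*(y1-y2)) by (apply Rsqr_pos_lt; lra). nra. }
  set (K := 4*(D*D*D)/(E*E*E) + 3*D/E).
  assert (HK : 0 < K).
  { unfold K. assert (0 < E*E*E) by (repeat apply Rmult_lt_0_compat; lra).
    assert (0 < D*D*D) by (repeat apply Rmult_lt_0_compat; lra).
    assert (0 < 4*(D*D*D)/(E*E*E)) by (apply Rdiv_lt_0_compat; lra).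
    assert (0 < 3*D/E) by (apply Rdiv_lt_0_compat; lra). lra. }
  set (h := fun b => (D*D*D + 3/4*D*(b*b)*(E*E)) * 4 / (b*b*b*(E*E*E))).
  assert (Hh0 : forall b, 0 < b -> 0 < h b).
  { intros b Hb. unfold h.
    assert (0 < E*E*E) by (repeat apply Rmult_lt_0_compat; lra).
    assert (0 < b*b*b) by (repeat apply Rmult_lt_0_compat; lra).
    assert (0 < D*D*D) by (repeat apply Rmult_lt_0_compat; lra).
    assert (0 < b*b) by (repeat apply Rmult_lt_0_compat; lra).
    assert (0 < E*E) by (repeat apply Rmult_lt_0_compat; lra).
    assert (0 < D*(b*b)*(E*E)) by (repeat apply Rmult_lt_0_compat; lra).
    apply Rdiv_lt_0_compat; [lra|]. repeat apply Rmult_lt_0_compat; lra. }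
  assert (Hlimh : is_lim h p_infty 0).
  { apply (is_lim_le_le_loc (fun _ => 0) (fun b => K * / b)).
    - exists 1. intros b Hb. split; [left; apply Hh0; lra|].

      assert (0 < E*E*E) by (repeat apply Rmult_lt_0_compat; lra).
      assert (0 < D*D*D) by (repeat apply Rmult_lt_0_compat; lra).
      assert (0 < b*b) by (repeat apply Rmult_lt_0_compat; lra).
      assert (Hx : h b = 4*(D*D*D)/(E*E*E) * / (b*b*b) + 3*D/E * / b)
        by (unfold h; field; repeat split; lra).
      rewrite Hx. unfold K. rewrite Rmult_plus_distr_r.
      apply Rplus_le_compat_r. apply Rmult_le_compat_l.
      { left; apply Rdiv_lt_0_compat; lra. }
      apply Rinv_le_contravar; [lra|].
      assert (1 <= b*b) by nra. nra.
    - apply is_lim_const.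
    - replace (Finite 0) with (Rbar_mult K 0) by (simpl; f_equal; ring).
      apply is_lim_scal_l.
      replace (Finite 0) with (Rbar_inv p_infty) by reflexivity.
      apply is_lim_inv; [apply is_lim_id | discriminate]. }
  replace (- (PI / 2)) with (- (PI / 2) + 0) by ring.
  apply (is_lim_ext_loc (fun b => - (PI/2) + atan (h b))).
  - exists 0. intros b Hb. unfold Cart. rewrite prod_eq. fold D E.
    assert (HR : 0 < D*D*D + 3/4*D*(b*b)*(E*E)).
    { assert (0 < D*D*D) by (repeat apply Rmult_lt_0_compat; lra).
      assert (0 < b*b) by (repeat apply Rmult_lt_0_compat; lra).
      assert (0 < D*(b*b)*(E*E)) by (repeat apply Rmult_lt_0_compat; lra). lra. }
    unfold Carg; simpl. destruct (Rlt_dec 0 _); [|lra].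
    assert (Hb3 : 0 < b*b*b*(E*E*E)) by (repeat apply Rmult_lt_0_compat; lra).
    replace (- (b * b * b) * (E * E * E) / 4 / (D * D * D + 3 / 4 * D * (b * b) * (E * E)))
      with (- / h b).
    2:{ unfold h. field. repeat split; lra. }
    rewrite atan_opp, atan_inv by (apply Hh0; lra). ring.
  - apply is_lim_plus'; [apply is_lim_const|].
    apply (is_lim_comp atan h p_infty 0 0); [apply atan_lim0 | exact Hlimh |].
    exists 0. intros b Hb. intro Heq. injection Heq. intro. assert (Hp := Hh0 b Hb). lra.
Qed.
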